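(* Let $n\ge2$, $1\le p\le\infty$ and $N\ge0$. Then: (i) $\phi_N$ is quasi-homogeneous of degree $N$ on $[0,R]$; (ii) $\phi_{N+1}(t)\le\phi(t)\phi_N(t)$ for every $t\in[0,R]$; (iii) $\phi_N(t)\le\phi(t)^N$ for every $t\in[0,R]$; (iv) the function $\varphi_N(t)=t\,\phi_N(t)$ is a gauge function of order $N+1$ on $[0,R]$.
   Context: $\omega(t)=\left(1+\frac{t}{(n-1)^{1/p}}\right)^{n-1}$ (with $(n-1)^{1/p}=1$ if $p=\infty$) and $\Psi(t)=(1+2t)\omega(t)$ for $t\ge0$; $R$ is the unique positive solution of $\Psi(t)=2$; $\phi(t)=\frac{\omega(t)-1}{1-2t\omega(t)}$ on $[0,R]$. On $[0,R]$ define recursively $\phi_0\equiv1$, $\omega_N(t)=\left(1+\frac{t\phi_N(t)}{(n-1)^{1/p}}\right)^{n-1}$, $\phi_{N+1}(t)=\frac{\omega_N(t)-1}{1-2t\omega_N(t)}$; these are well-defined nondecreasing functions $[0,R]\to[0,1]$. A function $g:J\to\mathbb{R}_+$ on an interval $J\subseteq\mathbb{R}_+$ containing $0$ is quasi-homogeneous of degree $r\ge0$ on $J$ if $g(\lambda t)\le\lambda^r g(t)$ for all $\lambda\in[0,1]$ and $t\in J$. A function $g:J\to J$ is a gauge function of order $r\ge1$ on $J$ if it is quasi-homogeneous of degree $r$ on $J$ and $g(t)\le t$ for all $t\in J$. *)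

(* Defs.v *)
From Stdlib Require Import Reals Lra.
Open Scope R_scope.

Inductive expo : Type := PFin (p : R) | PInf.

Definition expo_ge1 (p : expo) : Prop :=
  match p with PFin q => 1 <= q | PInf => True end.

Definition rootp (n : nat) (p : expo) : R :=
  match p with
  | PFin q => Rpower (INR (n - 1)) (1 / q)
  | PInf => 1
  end.

Definition omega (n : nat) (p : expo) (t : R) : R :=
  (1 + t / rootp n p) ^ (n - 1).

Definition Psi (n : nat) (p : expo) (t : R) : R :=
  (1 + 2 * t) * omega n p t.

Definition phi (n : nat) (p : expo) (t : R) : R :=
  (omega n p t - 1) / (1 - 2 * t * omega n p t).

Fixpoint phiN (n : nat) (p : expo) (N : nat) (t : R) : R :=
  match N with
  | O => 1
  | S M =>
      let w := (1 + t * phiN n p M t / rootp n p) ^ (n - 1) in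
      (w - 1) / (1 - 2 * t * w)
  end.

Definition omegaN (n : nat) (p : expo) (N : nat) (t : R) : R :=
  (1 + t * phiN n p N t / rootp n p) ^ (n - 1).

Definition rpow (l r : R) : R :=
  if Req_EM_T l 0 then (if Req_EM_T r 0 then 1 else 0) else Rpower l r.

Definition inJ (a t : R) : Prop := 0 <= t <= a.

Definition quasi_homogeneous (a : R) (r : R) (g : R -> R) : Prop :=
  (forall t, inJ a t -> 0 <= g t) /\
  forall lam t, 0 <= lam <= 1 -> inJ a t -> g (lam * t) <= rpow lam r * g t.

Definition gauge_function (a : R) (r : R) (g : R -> R) : Prop :=
  (forall t, inJ a t -> inJ a (g t)) /\
  quasi_homogeneous a r g /\
  (forall t, inJ a t -> g t <= t).

(* Main.v *)
Require Import Defs.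
From Stdlib Require Import Reals.
From Stdlib Require Import Lra Psatz.
Open Scope R_scope.

Lemma conv_pow (m : nat) (a u : R) : 0 <= a <= 1 -> 0 <= u ->
  (1 + a * u) ^ m <= 1 + a * ((1 + u) ^ m - 1).
Proof.
  intros Ha Hu. induction m as [|m IH]; simpl.
  - lra.
  - assert (HP : 1 <= (1 + u) ^ m) by (apply pow_R1_Rle; lra).
    assert (H1 : (1 + a * u) * (1 + a * u) ^ m <= (1 + a * u) * (1 + a * ((1 + u) ^ m - 1))).
    { apply Rmult_le_compat_l; nra. }
    assert (H2 : 0 <= a * u * ((1 + u) ^ m - 1) * (1 - a)).
    { apply Rmult_le_pos; [apply Rmult_le_pos; [apply Rmult_le_pos|]|]; lra. }
    nra.
Qed.

Lemma Rdiv_le_0_compat (a b : R) : 0 <= a -> 0 < b -> 0 <= a / b.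
Proof. intros. unfold Rdiv. apply Rmult_le_pos; [lra|left; apply Rinv_0_lt_compat; lra]. Qed.

Definition Gf (m : nat) (r t y : R) : R :=
  ((1 + t * y / r) ^ m - 1) / (1 - 2 * t * (1 + t * y / r) ^ m).

Lemma pow_le1 (l : R) (N : nat) : 0 <= l <= 1 -> l ^ N <= 1.
Proof. intros H. rewrite <- (pow1 N). apply pow_incr. lra. Qed.

Section Key.
Variables (m : nat) (r R0 : R).
Hypothesis Hm : (1 <= m)%nat.
Hypothesis Hr : 0 < r.
Hypothesis HR : 0 < R0.
Hypothesis HPsi : (1 + 2 * R0) * (1 + R0 / r) ^ m = 2.

Lemma WR_gt1 : 1 < (1 + R0 / r) ^ m.
Proof.
  apply Rlt_pow_R1; [|lia].
  assert (0 < R0 / r) by (apply Rdiv_lt_0_compat; lra). lra.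
Qed.

Lemma W_bound (z : R) : 0 <= z <= R0 -> 1 <= (1 + z / r) ^ m <= (1 + R0 / r) ^ m.
Proof.
  intros Hz. assert (0 <= z / r) by (apply Rdiv_le_0_compat; lra).
  assert (z / r <= R0 / r) by (apply Rmult_le_compat_r; [left; apply Rinv_0_lt_compat|]; lra).
  split. apply pow_R1_Rle; lra. apply pow_incr; lra.
Qed.

Lemma denom_pos (t z : R) : 0 <= t <= R0 -> 0 <= z <= R0 ->
  (1 + R0 / r) ^ m - 1 <= 1 - 2 * t * (1 + z / r) ^ m.
Proof.
  intros Ht Hz. destruct (W_bound z Hz) as [A B].
  assert (t * (1 + z / r) ^ m <= R0 * (1 + R0 / r) ^ m).
  { apply Rmult_le_compat; lra. }
  lra.
Qed.

Lemma G_le (t' t x a y : R) :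
  0 <= t' -> t' <= t -> t <= R0 -> 0 <= x <= 1 -> 0 <= a <= 1 -> 0 <= y ->
  t' * y <= a * (t * x) ->
  Gf m r t' y <= a * Gf m r t x.
Proof.
  intros H1 H2 H3 Hx Ha Hy Hc. unfold Gf.
  assert (Htx : 0 <= t * x <= R0) by nra.
  assert (Hty : 0 <= t' * y <= R0) by nra.
  pose proof (W_bound _ Htx) as [W1 W2].
  pose proof (W_bound _ Hty) as [W1' W2'].
  pose proof WR_gt1.
  set (W := (1 + t * x / r) ^ m) in *.
  set (W' := (1 + t' * y / r) ^ m) in *.
  assert (hu : 0 <= t * x / r) by (apply Rdiv_le_0_compat; lra).
  assert (h1 : t' * y / r <= a * (t * x / r)).
  { unfold Rdiv. rewrite <- Rmult_assoc. apply Rmult_le_compat_r; [left; apply Rinv_0_lt_compat|]; lra. }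
  assert (h2 : W' <= (1 + a * (t * x / r)) ^ m).
  { apply pow_incr. split; [|lra]. assert (0 <= t' * y / r) by (apply Rdiv_le_0_compat; lra). lra. }
  pose proof (conv_pow m a (t * x / r) Ha hu) as h3. fold W in h3.
  assert (hW : W' - 1 <= a * (W - 1)) by lra.
  assert (hW2 : W' <= W) by nra.
  assert (hD : 0 < 1 - 2 * t * W).
  { pose proof (denom_pos t (t * x) (conj (Rle_trans _ _ _ H1 H2) H3) Htx). fold W in H0. lra. }
  assert (hD' : 1 - 2 * t * W <= 1 - 2 * t' * W').
  { assert (t' * W' <= t * W) by (apply Rmult_le_compat; lra). lra. }
  unfold Rdiv.
  apply Rle_trans with ((W' - 1) * / (1 - 2 * t * W)).
  { apply Rmult_le_compat_l; [lra|]. apply Rinv_le_contravar; lra. }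
  rewrite <- Rmult_assoc. apply Rmult_le_compat_r.
  { left; apply Rinv_0_lt_compat; lra. }
  lra.
Qed.

Lemma G_nonneg (t y : R) : 0 <= t <= R0 -> 0 <= y <= 1 -> 0 <= Gf m r t y.
Proof.
  intros Ht Hy. unfold Gf.
  assert (Hty : 0 <= t * y <= R0) by nra.
  pose proof (W_bound _ Hty) as [W1 W2].
  pose proof (denom_pos t (t * y) Ht Hty). pose proof WR_gt1.
  apply Rdiv_le_0_compat; lra.
Qed.

Lemma G1_le1 (t : R) : 0 <= t <= R0 -> Gf m r t 1 <= 1.
Proof.
  intros Ht. unfold Gf. rewrite Rmult_1_r.
  pose proof (W_bound _ Ht) as [W1 W2].
  pose proof (denom_pos t t Ht Ht). pose proof WR_gt1.
  set (W := (1 + t / r) ^ m) in *.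
  assert (t * W <= R0 * (1 + R0 / r) ^ m) by (apply Rmult_le_compat; lra).
  assert (W - 1 <= 1 - 2 * t * W) by nra.
  unfold Rdiv. apply (Rmult_le_reg_r (1 - 2 * t * W)); [lra|].
  rewrite Rmult_assoc, Rinv_l by lra. lra.
Qed.
End Key.

Lemma rootp_pos (n : nat) (p : expo) : 0 < rootp n p.
Proof. destruct p; simpl; [unfold Rpower; apply exp_pos | lra]. Qed.

Lemma phiN_S n p N t : phiN n p (S N) t = Gf (n - 1) (rootp n p) t (phiN n p N t).
Proof. reflexivity. Qed.

Lemma phi_G n p t : phi n p t = Gf (n - 1) (rootp n p) t 1.
Proof. unfold phi, omega, Gf. rewrite Rmult_1_r. reflexivity. Qed.

Lemma rpow_pow (l : R) (N : nat) : 0 <= l -> rpow l (INR N) = l ^ N.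
Proof.
  intros Hl. unfold rpow. destruct (Req_EM_T l 0) as [E|E].
  - subst. destruct (Req_EM_T (INR N) 0) as [E2|E2].
    + destruct N; [reflexivity|]. exfalso. pose proof (pos_INR N). rewrite S_INR in E2. lra.
    + destruct N; [simpl in E2; lra|]. simpl. ring.
  - apply Rpower_pow. lra.
Qed.

Theorem lemma2p3 (n : nat) (p : expo) (N : nat) (Rr : R) :
  (2 <= n)%nat -> expo_ge1 p ->
  0 < Rr -> Psi n p Rr = 2 ->
  (forall t, 0 < t -> Psi n p t = 2 -> t = Rr) ->
  quasi_homogeneous Rr (INR N) (phiN n p N) /\
  (forall t, inJ Rr t -> phiN n p (S N) t <= phi n p t * phiN n p N t) /\
  (forall t, inJ Rr t -> phiN n p N t <= (phi n p t) ^ N) /\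
  gauge_function Rr (INR (S N)) (fun t => t * phiN n p N t).
Proof.
  intros Hn _ HR HPsi _.
  assert (Hm : (1 <= n - 1)%nat) by lia.
  pose proof (rootp_pos n p) as Hr.
  assert (HP : (1 + 2 * Rr) * (1 + Rr / rootp n p) ^ (n - 1) = 2) by exact HPsi.
  assert (F1 : forall N t, inJ Rr t -> 0 <= phiN n p N t <= 1).
  { intros M. induction M as [|M IH]; intros t Ht; [simpl; lra|].
    rewrite phiN_S. destruct (IH t Ht) as [A B]. split.
    - apply G_nonneg with Rr; auto; lra.
    - apply Rle_trans with (1 * Gf (n - 1) (rootp n p) t 1).
      + destruct Ht. apply G_le with Rr; auto; nra.
      + rewrite Rmult_1_l. apply G1_le1 with Rr; auto. }
  assert (Hphi0 : forall t, inJ Rr t -> 0 <= phi n p t).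
  { intros t Ht. rewrite phi_G. apply G_nonneg with Rr; auto; lra. }
  assert (F2 : forall N t, inJ Rr t -> phiN n p (S N) t <= phi n p t * phiN n p N t).
  { intros M t Ht. rewrite phiN_S, phi_G, Rmult_comm. destruct (F1 M t Ht). destruct Ht.
    apply G_le with Rr; auto; nra. }
  assert (F3 : forall N t, inJ Rr t -> phiN n p N t <= (phi n p t) ^ N).
  { intros M. induction M as [|M IH]; intros t Ht; [simpl; lra|].
    apply Rle_trans with (phi n p t * phiN n p M t); [apply F2; auto|].
    simpl. apply Rmult_le_compat_l; auto. }
  assert (F4 : forall N l t, 0 <= l <= 1 -> inJ Rr t ->
             phiN n p N (l * t) <= l ^ N * phiN n p N t).
  { intros M. induction M as [|M IH]; intros l t Hl Ht; [simpl; lra|].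
    rewrite !phiN_S.
    assert (Hlt : inJ Rr (l * t)) by (destruct Ht; split; nra).
    destruct (F1 M (l * t) Hlt). destruct (F1 M t Ht).
    pose proof (IH l t Hl Ht). pose proof (pow_le l M (proj1 Hl)).
    pose proof (pow_le1 l M Hl). destruct Ht.
    apply G_le with Rr; auto; try nra.
    - simpl. split; nra.
    - simpl. assert (l * t * phiN n p M (l * t) <= l * t * (l ^ M * phiN n p M t))
        by (apply Rmult_le_compat_l; nra). nra. }
  split; [|split; [|split]].
  - split; [intros t Ht; apply F1; auto|].
    intros l t Hl Ht. rewrite rpow_pow by lra. apply F4; auto.
  - apply F2.
  - apply F3.
  - split; [|split].
    + intros t Ht. destruct (F1 N t Ht). destruct Ht. split; nra.
    + split; [intros t Ht; destruct (F1 N t Ht); destruct Ht; nra|].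
      intros l t Hl Ht. rewrite rpow_pow by lra.
      pose proof (F4 N l t Hl Ht). destruct (F1 N t Ht).
      assert (Hlt : inJ Rr (l * t)) by (destruct Ht; split; nra).
      destruct (F1 N (l * t) Hlt). destruct Ht. simpl.
      assert (l * t * phiN n p N (l * t) <= l * t * (l ^ N * phiN n p N t))
        by (apply Rmult_le_compat_l; nra). nra.
    + intros t Ht. destruct (F1 N t Ht). destruct Ht. nra.
Qed.
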